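(* Let $r\in\mathbb{N}$ with $r\ge2$, let $v\in\mathbb{YF}^{r,+}_\infty$, $\beta\in(0,1]$ and $k\in\mathbb{N}_0$. Then $$\lim_{m\to\infty}\sum_{w\in\overline{Q}(r,v,m,k)}\mu_{r,v,\beta}(w)=0,$$ where $\overline{Q}(r,v,m,k)=\{w\in\mathbb{YF}^r:\ |w|=m,\ e(w,v)<k\}$.
   Context: Fix $r\in\mathbb{N}$. Words and statistics. Consider finite words over $\{1_1,\dots,1_r,2\}$. A letter $1_i$ is a one with digit value $1$; $2$ is a two with digit value $2$. $\varepsilon$ is the empty word. For a word $x$, $|x|$ is the sum of digit values, $d(x)$ the number of twos. The graph $\mathbb{YF}^r$. It is the graded graph on all finite words, graded by $|\cdot|$. From $x$ there is a downward edge to every word obtained by one of two operations: (i) delete the leftmost one; (ii) replace a $2$ lying left of the leftmost one (any $2$ if there are no ones) by $1_i$, with arbitrary $i$. Path counts. $d_r(x,y)$ is the number of downward paths $y=y_n\to\dots\to y_m=x$ with $|y_i|=i$. Infinite words. $\mathbb{YF}^r_\infty$ is the set of left-infinite words $\dots\alpha_2\alpha_1$. Common suffixes. For words $w,v$, $e(w,v)$ is the number of ones in the longest common suffix of $w$ and $v$; $1_i$ and $1_j$ with $i\neq j$ are different letters. The function $g$. Write $x=\dots2\,1^{\beta_m}\,2\cdots2\,1^{\beta_1}\,2\,1^{\beta_0}$, where $1^\beta$ is a possibly empty block of $\beta$ ones. For $1\le j\le d(x)$ set $g(x,j)=\beta_0+\dots+\beta_{j-1}+2j-1$. The function $\pi$.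 Set $\pi(x)=\prod_{j:\,g(x,j)>1}\frac{g(x,j)-1}{g(x,j)}$ and $\mathbb{YF}^{r,+}_\infty=\{v\in\mathbb{YF}^r_\infty:\pi(v)>0\}$. Letterwise convergence. $v_n\to v$ letterwise means: for every $k$ and all large $n$, the last $k$ letters of $v_n$ coincide with the last $k$ letters of $v$. The measures $\mu_{r,v,\beta}$. For $v\in\mathbb{YF}^{r,+}_\infty$ and $\beta\in(0,1]$ there exist finite words $v_n\to v$ letterwise with $\pi(v_n)\to\beta\pi(v)$. For any such sequence and any $w\in\mathbb{YF}^r$, the limit $\lim_n d_r(\varepsilon,w)d_r(w,v_n)/d_r(\varepsilon,v_n)$ exists and depends only on $w,v,\beta$ (proved in the paper). It is denoted $\mu_{r,v,\beta}(w)$. *)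

(* Defs.v *)
From Stdlib Require Import Reals Lra Lia Arith List.
From Coquelicot Require Import Coquelicot.
Import ListNotations.
Open Scope R_scope.

(** Letters: [One i] is the letter 1_{i+1} (0-based index, valid iff i < r);
    [Two] is the letter 2. *)
Inductive letter : Set := One (i : nat) | Two.

Definition letter_eqb (a b : letter) : bool :=
  match a, b with
  | One i, One j => Nat.eqb i j
  | Two, Two => true
  | _, _ => false
  end.

Definition valid_letter (r : nat) (a : letter) : Prop :=
  match a with One i => (i < r)%nat | Two => True end.

(** Finite words are lists in READING order: the head is the leftmost letter,
    the last element is the rightmost letter alpha_1. *)
Definition word := list letter.

Definition valid_word (r : nat) (x : word) : Prop := forall a, List.In a x -> valid_letter r a.

Fixpoint word_eqb (x y : word) : bool :=
  match x, y with
  | [], [] => true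
  | a :: x', b :: y' => letter_eqb a b && word_eqb x' y'
  | _, _ => false
  end.

Definition digit (a : letter) : nat := match a with One _ => 1 | Two => 2 end.

Definition size (x : word) : nat := fold_right (fun a s => (digit a + s)%nat) 0%nat x.

Definition is_one (a : letter) : bool := match a with One _ => true | Two => false end.

Fixpoint del_leftmost_one (x : word) : option word :=
  match x with
  | [] => None
  | One _ :: x' => Some x'
  | Two :: x' => option_map (cons Two) (del_leftmost_one x')
  end.

(** Operation (ii): replace a 2 lying left of the leftmost one (i.e. a 2 all of
    whose left neighbours are 2's) by 1_i, for every i < r. *)
Fixpoint replace_leading_twos (r : nat) (x : word) : list word :=
  match x with
  | Two :: x' =>
      map (fun i => One i :: x') (seq 0 r)
      ++ map (cons Two) (replace_leading_twos r x')
  | _ => []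
  end.

Definition down (r : nat) (x : word) : list word :=
  match del_leftmost_one x with
  | Some y => y :: replace_leading_twos r x
  | None => replace_leading_twos r x
  end.

(** Number of downward paths of exactly n edges from y to x. *)
Fixpoint npaths (r : nat) (n : nat) (x y : word) : nat :=
  match n with
  | O => if word_eqb x y then 1%nat else 0%nat
  | S n' => fold_right (fun c s => (npaths r n' x c + s)%nat) 0%nat (down r y)
  end.

(** d_r(x,y): every edge lowers |.| by one, so paths from y to x with
    |y_i| = i have exactly |y| - |x| edges. *)
Definition dr (r : nat) (x y : word) : nat := npaths r (size y - size x) x y.

Fixpoint words_of_size (r : nat) (m : nat) : list word :=
  match m with
  | O => [[]]
  | S m' =>
      flat_map (fun i => map (cons (One i)) (words_of_size r m')) (seq 0 r)
      ++ match m' with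
         | O => []
         | S m'' => map (cons Two) (words_of_size r m'')
         end
  end.

(** Infinite words ...alpha_2 alpha_1 : [v j] is alpha_{j+1}. *)
Definition inf_word := nat -> letter.

Definition valid_inf_word (r : nat) (v : inf_word) : Prop :=
  forall j, valid_letter r (v j).

(** e(w,v): number of ones in the longest common suffix of w and v.
    [l] is a finite word read from the right. *)
Fixpoint e_aux (l : list letter) (v : inf_word) (j : nat) : nat :=
  match l with
  | [] => 0%nat
  | a :: l' =>
      if letter_eqb a (v j)
      then ((if is_one a then 1 else 0) + e_aux l' v (S j))%nat
      else 0%nat
  end.

Definition e (w : word) (v : inf_word) : nat := e_aux (rev w) v 0.

(** g-values: reading a word from the right ([l] is the reversed word), with
    [acc] the digit sum of the part already read, the j-th two from the right
    gets g = beta_0 + ... + beta_{j-1} + 2j - 1 = acc + 1. *)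
Fixpoint gs (l : list letter) (acc : nat) : list nat :=
  match l with
  | [] => []
  | One _ :: l' => gs l' (S acc)
  | Two :: l' => S acc :: gs l' (acc + 2)
  end.

Definition g (x : word) (j : nat) : nat := nth (j - 1) (gs (rev x) 0) 0%nat.

Definition pi_of_gs (l : list nat) : R :=
  fold_right (fun gv p =>
     (if Nat.ltb 1 gv then (INR gv - 1) / INR gv else 1) * p) 1 l.

Definition pi (x : word) : R := pi_of_gs (gs (rev x) 0).

Definition pi_inf (v : inf_word) : R :=
  real (Lim_seq (fun N => pi_of_gs (gs (map v (seq 0 N)) 0))).

Definition letterwise_cvg (vn : nat -> word) (v : inf_word) : Prop :=
  forall k, exists N, forall n, (N <= n)%nat ->
    (k <= length (vn n))%nat /\
    forall j, (j < k)%nat -> nth j (rev (vn n)) Two = v j.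

(** mu_{r,v,beta}(w) computed along the sequence vn (the paper shows this limit
    exists and is independent of the admissible sequence). *)
Definition mu_along (r : nat) (vn : nat -> word) (w : word) : R :=
  real (Lim_seq (fun n =>
    INR (dr r [] w) * INR (dr r w (vn n)) / INR (dr r [] (vn n)))).

Definition sumR (l : list R) : R := fold_right Rplus 0 l.

(* Main.v *)
Require Import Defs.
From Stdlib Require Import Reals List Lia Lra Arith Classical.
From Coquelicot Require Import Coquelicot.
Import ListNotations.
Open Scope R_scope.

Definition sumN (f : word -> nat) (l : list word) : nat :=
  fold_right (fun c s => (f c + s)%nat) 0%nat l.

Lemma sumN_cons f a l : sumN f (a :: l) = (f a + sumN f l)%nat.
Proof. reflexivity. Qed.

Lemma sumN_app f l1 l2 : sumN f (l1 ++ l2) = (sumN f l1 + sumN f l2)%nat.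
Proof. induction l1 as [|a l1 IH]; simpl; [reflexivity|]. unfold sumN in *. rewrite IH. lia. Qed.

Lemma sumN_ext_in f g l : (forall c, In c l -> f c = g c) -> sumN f l = sumN g l.
Proof. induction l as [|a l IH]; simpl; intros H; [reflexivity|]. unfold sumN in *. rewrite H by auto. rewrite IH; auto. Qed.

Lemma sumN_map f h l : sumN f (map h l) = sumN (fun c => f (h c)) (map (fun c => c) l).
Proof. induction l; simpl; auto. Qed.

Lemma sumN_map' (f : word -> nat) (h : word -> word) l :
  sumN f (map h l) = sumN (fun c => f (h c)) l.
Proof. induction l; simpl; auto. Qed.

Lemma sumN_zero f l : (forall c, In c l -> f c = 0%nat) -> sumN f l = 0%nat.
Proof. induction l as [|a l IH]; simpl; intros H; [reflexivity|]. unfold sumN in *. rewrite H by auto. rewrite IH; auto. Qed.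

Lemma filter_all_false {A} (f : A -> bool) l : (forall x, In x l -> f x = false) -> filter f l = [].
Proof. induction l as [|a l IH]; simpl; intros H; auto. rewrite H by auto. apply IH; auto. Qed.

Lemma letter_eqb_eq a b : letter_eqb a b = true <-> a = b.
Proof.
  destruct a, b; simpl; split; intros H; try discriminate; auto.
  - apply Nat.eqb_eq in H; subst; auto.
  - inversion H; apply Nat.eqb_refl.
Qed.

Lemma word_eqb_eq x y : word_eqb x y = true <-> x = y.
Proof.
  revert y; induction x; destruct y; simpl; split; intros H; try discriminate; auto.
  - apply andb_prop in H as [H1 H2]. apply letter_eqb_eq in H1. apply IHx in H2. subst; auto.
  - inversion H; subst. apply andb_true_intro; split. apply letter_eqb_eq; auto. apply IHx; auto.
Qed.

Lemma word_eqb_size x y : size x <> size y -> word_eqb x y = false.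
Proof.
  intros H. destruct (word_eqb x y) eqn:E; auto. apply word_eqb_eq in E; subst; tauto.
Qed.

Lemma size_cons a x : size (a :: x) = (digit a + size x)%nat.
Proof. reflexivity. Qed.

Lemma del_size x z : del_leftmost_one x = Some z -> (size z + 1 = size x)%nat.
Proof.
  revert z; induction x as [|a x IH]; simpl; intros z H; try discriminate.
  destruct a; simpl in *.
  - inversion H; subst; lia.
  - destruct (del_leftmost_one x) eqn:E; simpl in H; try discriminate.
    inversion H; subst. specialize (IH w eq_refl). simpl. lia.
Qed.

Lemma rep_size r x z : In z (replace_leading_twos r x) -> (size z + 1 = size x)%nat.
Proof.
  revert z; induction x as [|a x IH]; simpl; intros z H; try tauto.
  destruct a; simpl in *; try tauto.
  apply in_app_or in H as [H|H].
  - apply in_map_iff in H as [i [<- _]]. simpl. lia.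
  - apply in_map_iff in H as [w [<- Hw]]. apply IH in Hw. simpl. lia.
Qed.

Lemma down_size r x z : In z (down r x) -> (size z + 1 = size x)%nat.
Proof.
  unfold down. destruct (del_leftmost_one x) eqn:E.
  - intros [<-|H]. apply del_size; auto. eapply rep_size; eauto.
  - apply rep_size.
Qed.

Lemma dr_lt r u y : (size y < size u)%nat -> dr r u y = 0%nat.
Proof.
  intros H. unfold dr. replace (size y - size u)%nat with 0%nat by lia. simpl.
  rewrite word_eqb_size; auto. lia.
Qed.

Lemma dr_eq r u y : size y = size u -> dr r u y = if word_eqb u y then 1%nat else 0%nat.
Proof. intros H. unfold dr. rewrite H, Nat.sub_diag. reflexivity. Qed.

Lemma dr_step r u y : (size u < size y)%nat -> dr r u y = sumN (dr r u) (down r y).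
Proof.
  intros H. unfold dr. remember (size y - size u)%nat as n.
  destruct n as [|n]; [lia|]. simpl. unfold sumN.
  apply (sumN_ext_in (fun c => npaths r n u c) (fun c => npaths r (size c - size u) u c)).
  intros c Hc. apply down_size in Hc. f_equal. lia.
Qed.

Lemma down_one r i x : down r (One i :: x) = [x].
Proof. reflexivity. Qed.

Lemma sumN_down_two r f x :
  sumN f (down r (Two :: x)) =
  (sumN (fun z => f (Two :: z)) (down r x) + sumN f (map (fun i => One i :: x) (seq 0 r)))%nat.
Proof.
  unfold down. simpl. destruct (del_leftmost_one x) eqn:E; simpl.
  - rewrite !sumN_app, !sumN_map'. lia.
  - rewrite !sumN_app, !sumN_map'. lia.
Qed.

Lemma dr_one r u i x : dr r u (One i :: x) = (dr r u x + if word_eqb u (One i :: x) then 1 else 0)%nat.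
Proof.
  destruct (Nat.lt_trichotomy (size u) (size (One i :: x))) as [H|[H|H]].
  - rewrite dr_step by auto. rewrite down_one. simpl. rewrite word_eqb_size by lia. lia.
  - rewrite dr_eq by auto. rewrite dr_lt by (simpl in *; lia). lia.
  - rewrite !dr_lt by (simpl in *; lia). rewrite word_eqb_size by lia. lia.
Qed.

Lemma sumN_ones r u x :
  sumN (dr r u) (map (fun i => One i :: x) (seq 0 r)) =
  (r * dr r u x + length (filter (fun i => word_eqb u (One i :: x)) (seq 0 r)))%nat.
Proof.
  assert (G: forall n s, sumN (dr r u) (map (fun i => One i :: x) (seq s n)) =
    (n * dr r u x + length (filter (fun i => word_eqb u (One i :: x)) (seq s n)))%nat).
  { induction n as [|n IH]; intros s; [reflexivity|].
    cbn [seq map filter]. rewrite sumN_cons.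
    rewrite dr_one. rewrite IH. destruct (word_eqb u (One s :: x)); simpl; lia. }
  apply G.
Qed.

Lemma filter_ones_count r j x x' :
  (j < r)%nat ->
  length (filter (fun i => word_eqb (One j :: x') (One i :: x)) (seq 0 r)) =
  if word_eqb x' x then 1%nat else 0%nat.
Proof.
  intros Hj.
  rewrite (filter_ext _ (fun i => andb (Nat.eqb j i) (word_eqb x' x))) by reflexivity.
  destruct (word_eqb x' x).
  - assert (G: forall n s, length (filter (fun i => andb (Nat.eqb j i) true) (seq s n)) =
        if andb (s <=? j) (j <? s + n) then 1%nat else 0%nat).
    { induction n as [|n IH]; intros s.
      - simpl. destruct (s <=? j) eqn:E1; destruct (j <? s + 0) eqn:E2; simpl; auto.
        apply Nat.leb_le in E1; apply Nat.ltb_lt in E2; lia.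
      - cbn [seq filter]. rewrite Bool.andb_true_r.
        destruct (Nat.eqb_spec j s).
        + subst. simpl length. rewrite IH.
          replace (S s <=? s) with false by (symmetry; apply Nat.leb_gt; lia).
          rewrite Nat.leb_refl. replace (s <? s + S n) with true by (symmetry; apply Nat.ltb_lt; lia).
          reflexivity.
        + rewrite IH.
          destruct (S s <=? j) eqn:E1; destruct (s <=? j) eqn:E2;
          destruct (j <? S s + n) eqn:E3; destruct (j <? s + S n) eqn:E4; simpl; auto;
          repeat match goal with
          | H : (_ <=? _) = true |- _ => apply Nat.leb_le in H
          | H : (_ <=? _) = false |- _ => apply Nat.leb_gt in H
          | H : (_ <? _) = true |- _ => apply Nat.ltb_lt in H
          | H : (_ <? _) = false |- _ => apply Nat.ltb_ge in H
          end; lia. }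
    rewrite G. replace (0 <=? j) with true by (symmetry; apply Nat.leb_le; lia).
    replace (j <? 0 + r) with true by (symmetry; apply Nat.ltb_lt; lia). reflexivity.
  - rewrite filter_all_false; auto. intros i _. apply Bool.andb_false_r.
Qed.

Definition valid_first (r : nat) (u : word) : Prop :=
  match u with One j :: _ => (j < r)%nat | _ => True end.

Definition tl_dr (r : nat) (u x : word) : nat :=
  match u with [] => 0%nat | _ :: u1 => dr r u1 x end.

Ltac szs := repeat rewrite size_cons in *; try (simpl digit in * ).

Theorem dr_two r u x : valid_first r u ->
  dr r u (Two :: x) = (r * (size x + 1 - size u) * dr r u x + tl_dr r u x)%nat.
Proof.
  remember (size x) as n eqn:Hn. revert u x Hn.
  induction n as [n IH] using lt_wf_ind. intros u x Hn Hv. subst n.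
  destruct (Nat.lt_ge_cases (size u) (size x + 2)) as [Hlt|Hge].
  - rewrite dr_step by (simpl; lia).
    rewrite sumN_down_two, sumN_ones.
    assert (E1: sumN (fun z => dr r u (Two :: z)) (down r x) =
       (r * (size x - size u) * dr r u x + sumN (tl_dr r u) (down r x))%nat).
    { rewrite (sumN_ext_in _ (fun z => r * (size z + 1 - size u) * dr r u z + tl_dr r u z)%nat).
      2:{ intros z Hz. apply (IH (size z)); auto. apply down_size in Hz. lia. }
      assert (G: forall l, (forall z, In z l -> (size z + 1 = size x)%nat) ->
        sumN (fun z => r * (size z + 1 - size u) * dr r u z + tl_dr r u z)%nat l =
        (r * (size x - size u) * sumN (dr r u) l + sumN (tl_dr r u) l)%nat).
      { induction l as [|z l IHl]; simpl; intros Hl. lia.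
        rewrite IHl by auto. specialize (Hl z (or_introl eq_refl)).
        replace (size z + 1 - size u)%nat with (size x - size u)%nat by lia. nia. }
      rewrite G by (intros; eapply down_size; eauto).
      destruct (Nat.lt_ge_cases (size u) (size x)).
      + rewrite <- dr_step by auto. auto.
      + replace (size x - size u)%nat with 0%nat by lia. lia. }
    rewrite E1.
    destruct u as [|c u1]; simpl tl_dr.
    + rewrite sumN_zero by auto. simpl. rewrite Nat.sub_0_r.
      replace (length _) with 0%nat.
      2:{ clear. induction (seq 0 r); simpl; auto. }
      nia.
    + change (tl_dr r (c::u1)) with (dr r u1).
      destruct (Nat.lt_trichotomy (size u1) (size x)) as [H1|[H1|H1]].
      * rewrite <- dr_step by auto.
        assert (L: length (filter (fun i => word_eqb (c :: u1) (One i :: x)) (seq 0 r)) = 0%nat).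
        { rewrite filter_all_false; auto. intros i _.
          destruct c; simpl; auto. rewrite (word_eqb_size u1 x) by lia. apply Bool.andb_false_r. }
        rewrite L.
        destruct (Nat.le_gt_cases (size (c::u1)) (size x)).
        -- replace (size x + 1 - size (c :: u1))%nat with (size x - size (c::u1) + 1)%nat by lia. nia.
        -- rewrite dr_lt with (y := x) by auto. nia.
      * assert (Z: sumN (dr r u1) (down r x) = 0%nat).
        { apply sumN_zero. intros z Hz. apply dr_lt. apply down_size in Hz. lia. }
        rewrite Z. rewrite (dr_eq r u1 x) by auto.
        rewrite (dr_lt r (c::u1) x) by (szs; destruct c; simpl in *; lia).
        destruct c as [j|]; simpl in Hv.
        -- rewrite filter_ones_count by auto. lia.
        -- simpl in Hlt. lia.
      * assert (Z: sumN (dr r u1) (down r x) = 0%nat).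
        { apply sumN_zero. intros z Hz. apply dr_lt. apply down_size in Hz. lia. }
        rewrite Z. rewrite (dr_lt r u1 x) by auto.
        rewrite (dr_lt r (c::u1) x) by (szs; destruct c; simpl in *; lia).
        rewrite filter_all_false; [simpl; lia|]. intros i _.
        apply word_eqb_size. szs; destruct c; simpl in *; lia.
  - destruct (Nat.eq_dec (size u) (size x + 2)) as [He|Hne].
    + rewrite dr_eq by (simpl; lia).
      replace (size x + 1 - size u)%nat with 0%nat by lia.
      destruct u as [|c u1]; simpl in He. lia.
      simpl tl_dr. destruct c as [j|]; simpl in He.
      * rewrite (dr_lt r u1 x) by lia. simpl. lia.
      * rewrite (dr_eq r u1 x) by lia. simpl. destruct (word_eqb u1 x); simpl; lia.
    + rewrite dr_lt by (simpl; lia).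
      replace (size x + 1 - size u)%nat with 0%nat by lia.
      destruct u as [|c u1]; simpl in *. lia.
      rewrite (dr_lt r u1 x) by (szs; destruct c; simpl in *; lia). lia.
Qed.

Lemma dr_nil_one r i x : dr r [] (One i :: x) = dr r [] x.
Proof. rewrite dr_one. simpl. lia. Qed.

Lemma dr_nil_two r x : dr r [] (Two :: x) = (r * (size x + 1) * dr r [] x)%nat.
Proof. rewrite dr_two by exact I. simpl. rewrite Nat.sub_0_r. lia. Qed.

Lemma dr_nil_nil r : dr r [] [] = 1%nat.
Proof. reflexivity. Qed.

Lemma dr_nil_pos r x : (0 < r)%nat -> (0 < dr r [] x)%nat.
Proof.
  intros Hr. induction x as [|a x IH]. rewrite dr_nil_nil; lia.
  destruct a. rewrite dr_nil_one; auto. rewrite dr_nil_two. nia.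
Qed.

Lemma sumR_app l1 l2 : sumR (l1 ++ l2) = sumR l1 + sumR l2.
Proof. induction l1; simpl; [lra|]. rewrite IHl1; lra. Qed.

Lemma sumR_map_le {A} (f g : A -> R) l : (forall x, In x l -> f x <= g x) ->
  sumR (map f l) <= sumR (map g l).
Proof. induction l; simpl; intros H; [lra|]. assert (f a <= g a) by auto.
  assert (sumR (map f l) <= sumR (map g l)) by auto. lra. Qed.

Lemma sumR_map_ext {A} (f g : A -> R) l : (forall x, In x l -> f x = g x) ->
  sumR (map f l) = sumR (map g l).
Proof. induction l; simpl; intros H; [lra|]. rewrite H by auto. rewrite IHl; auto. Qed.

Lemma sumR_map_nonneg {A} (f : A -> R) l : (forall x, In x l -> 0 <= f x) -> 0 <= sumR (map f l).
Proof. induction l; simpl; intros H; [lra|]. assert (0 <= f a) by auto.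
  assert (0 <= sumR (map f l)) by auto. lra. Qed.

Lemma sumR_map_plus {A} (f g : A -> R) l : sumR (map (fun x => f x + g x) l) = sumR (map f l) + sumR (map g l).
Proof. induction l; simpl; [lra|]. rewrite IHl; lra. Qed.

Lemma sumR_map_scal {A} (c : R) (f : A -> R) l : sumR (map (fun x => c * f x) l) = c * sumR (map f l).
Proof. induction l; simpl; [lra|]. rewrite IHl; lra. Qed.

Lemma sumR_map_div {A} (c : R) (f : A -> R) l : sumR (map f l) / c = sumR (map (fun x => f x / c) l).
Proof. induction l; simpl. unfold Rdiv; lra. rewrite <- IHl. unfold Rdiv; lra. Qed.

Lemma sumR_map_mulr {A} (c : R) (f : A -> R) l : c * sumR (map f l) = sumR (map (fun x => c * f x) l).
Proof. induction l; simpl. lra. rewrite <- IHl. lra. Qed.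

Lemma sumR_map_map {A B} (f : B -> R) (h : A -> B) l : sumR (map f (map h l)) = sumR (map (fun x => f (h x)) l).
Proof. induction l; simpl; [lra|]. rewrite IHl; lra. Qed.

Lemma sumR_filter_le {A} (f : A -> R) (p : A -> bool) l : (forall x, In x l -> 0 <= f x) ->
  sumR (map f (filter p l)) <= sumR (map f l).
Proof. induction l; simpl; intros H; [lra|]. assert (0 <= f a) by auto.
  assert (sumR (map f (filter p l)) <= sumR (map f l)) by auto.
  destruct (p a); simpl; lra. Qed.

Lemma sumR_flat_map {A B} (f : B -> R) (h : A -> list B) l :
  sumR (map f (flat_map h l)) = sumR (map (fun a => sumR (map f (h a))) l).
Proof. induction l; simpl; [lra|]. rewrite map_app, sumR_app, IHl. lra. Qed.

Lemma sumR_const_seq (c : R) s n : sumR (map (fun _ : nat => c) (seq s n)) = INR n * c.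
Proof. revert s; induction n; intros s. simpl; lra. cbn [seq map]. unfold sumR in *. cbn [fold_right]. rewrite IHn. rewrite S_INR. lra. Qed.

Definition valid_letter_b (r : nat) (a : letter) : Prop := valid_letter r a.

Lemma wos_size r m w : In w (words_of_size r m) -> size w = m.
Proof.
  revert w. induction m as [m IH] using lt_wf_ind. intros w Hw.
  destruct m as [|m']; simpl in Hw.
  - destruct Hw as [<-|[]]; reflexivity.
  - apply in_app_or in Hw as [Hw|Hw].
    + apply in_flat_map in Hw as [i [_ Hi]]. apply in_map_iff in Hi as [w' [<- Hw']].
      rewrite size_cons. simpl digit. rewrite (IH m') by (auto; lia). lia.
    + destruct m' as [|m'']; [destruct Hw|].
      apply in_map_iff in Hw as [w' [<- Hw']].
      rewrite size_cons. simpl digit. rewrite (IH m'') by (auto; lia). lia.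
Qed.

Lemma wos_valid r m w : In w (words_of_size r m) -> valid_word r w.
Proof.
  revert w. induction m as [m IH] using lt_wf_ind. intros w Hw.
  destruct m as [|m']; simpl in Hw.
  - destruct Hw as [<-|[]]. intros a [].
  - apply in_app_or in Hw as [Hw|Hw].
    + apply in_flat_map in Hw as [i [Hi1 Hi]]. apply in_map_iff in Hi as [w' [<- Hw']].
      intros a [<-|Ha]. simpl. apply in_seq in Hi1; lia. apply (IH m' ltac:(lia) w'); auto.
    + destruct m' as [|m'']; [destruct Hw|].
      apply in_map_iff in Hw as [w' [<- Hw']].
      intros a [<-|Ha]. exact I. apply (IH m'' ltac:(lia) w'); auto.
Qed.

Lemma NoDup_map_cons (c : letter) (l : list word) : NoDup l -> NoDup (map (cons c) l).
Proof.
  intros H. induction H; simpl; constructor; auto.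
  intros Hin. apply in_map_iff in Hin as [y [Hy Hy']]. inversion Hy; subst; auto.
Qed.

Lemma NoDup_flat_ones (l : list word) s n : NoDup l ->
  NoDup (flat_map (fun i => map (cons (One i)) l) (seq s n)).
Proof.
  intros Hl. revert s; induction n; intros s; simpl. constructor.
  apply NoDup_app; auto. apply NoDup_map_cons; auto.
  intros a Ha Hb. apply in_map_iff in Ha as [w [<- _]].
  apply in_flat_map in Hb as [i [Hi Hw]]. apply in_map_iff in Hw as [w' [E _]].
  inversion E; subst. apply in_seq in Hi. lia.
Qed.

Lemma wos_nodup r m : NoDup (words_of_size r m).
Proof.
  induction m as [m IH] using lt_wf_ind.
  destruct m as [|m']; simpl.
  - constructor; [intros []|constructor].
  - apply NoDup_app.
    + apply NoDup_flat_ones. apply IH; lia.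
    + destruct m' as [|m'']. constructor. apply NoDup_map_cons. apply IH; lia.
    + intros a Ha Hb. destruct m' as [|m'']; [destruct Hb|].
      apply in_map_iff in Hb as [w [<- _]].
      apply in_flat_map in Ha as [i [_ Hw]]. apply in_map_iff in Hw as [w' [E _]]. discriminate.
Qed.

Lemma sumR_indicator (l : list word) (w : word) (c : R) : NoDup l -> 0 <= c ->
  sumR (map (fun u => if word_eqb u w then c else 0) l) <= c.
Proof.
  intros H Hc. induction H; simpl; [lra|].
  destruct (word_eqb x w) eqn:E.
  - apply word_eqb_eq in E; subst.
    rewrite (sumR_map_ext _ (fun _ => 0)). 
    + clear. induction l; simpl; lra.
    + intros u Hu. destruct (word_eqb u w) eqn:E'; auto. apply word_eqb_eq in E'; subst; tauto.
  - lra.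
Qed.

Lemma e_aux_app l c v j : (e_aux l v j <= e_aux (l ++ [c]) v j)%nat.
Proof.
  revert j; induction l as [|a l IH]; intros j; simpl. lia.
  destruct (letter_eqb a (v j)); [|lia]. specialize (IH (S j)). lia.
Qed.

Lemma e_cons c w v : (e w v <= e (c :: w) v)%nat.
Proof. unfold e. simpl. apply e_aux_app. Qed.

Definition bad (v : inf_word) (k : nat) (w : word) : bool := Nat.ltb (e w v) k.

Lemma bad_cons v k c w : bad v k (c :: w) = true -> bad v k w = true.
Proof. unfold bad. intros H. apply Nat.ltb_lt in H. apply Nat.ltb_lt. pose proof (e_cons c w v). lia. Qed.

Definition P (r : nat) (y u : word) : R := INR (dr r [] u) * INR (dr r u y) / INR (dr r [] y).

Definition Hm (r : nat) (v : inf_word) (k : nat) (y : word) (m : nat) : R :=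
  sumR (map (P r y) (filter (bad v k) (words_of_size r m))).

Lemma P_nonneg r y u : (0 < r)%nat -> 0 <= P r y u.
Proof. intros Hr. unfold P, Rdiv. apply Rmult_le_pos. apply Rmult_le_pos; apply pos_INR.
  apply Rlt_le, Rinv_0_lt_compat, lt_0_INR, dr_nil_pos; auto. Qed.

Lemma Hm_nonneg r v k y m : (0 < r)%nat -> 0 <= Hm r v k y m.
Proof. intros Hr. unfold Hm. apply sumR_map_nonneg. intros; apply P_nonneg; auto. Qed.

Lemma INR_pos_nat n : (0 < n)%nat -> 0 < INR n.
Proof. intros; apply lt_0_INR; auto. Qed.

Lemma P_one r i x u : (0 < r)%nat ->
  P r (One i :: x) u = P r x u + (if word_eqb u (One i :: x) then 1 else 0).
Proof.
  intros Hr. unfold P. rewrite dr_one, dr_nil_one, plus_INR.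
  pose proof (INR_pos_nat _ (dr_nil_pos r x Hr)).
  destruct (word_eqb u (One i :: x)) eqn:E.
  - apply word_eqb_eq in E. subst u. rewrite dr_nil_one. simpl INR. field. lra.
  - simpl INR. field. lra.
Qed.

Lemma P_two r x u : (0 < r)%nat -> valid_first r u ->
  P r (Two :: x) u = INR (size x + 1 - size u) / INR (size x + 1) * P r x u
     + INR (dr r [] u) * INR (tl_dr r u x) / (INR r * INR (size x + 1) * INR (dr r [] x)).
Proof.
  intros Hr Hv. unfold P. rewrite dr_two by auto. rewrite dr_nil_two.
  rewrite !plus_INR, !mult_INR.
  pose proof (INR_pos_nat _ (dr_nil_pos r x Hr)).
  pose proof (INR_pos_nat r Hr).
  assert (0 < INR (size x + 1)) by (apply lt_0_INR; lia).
  rewrite plus_INR in *. field. repeat split; lra.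
Qed.

Lemma sumR_filter_cons_le (f : word -> R) (p : word -> bool) (c : letter) L :
  (forall w, p (c :: w) = true -> p w = true) -> (forall w, 0 <= f (c :: w)) ->
  sumR (map f (filter p (map (cons c) L))) <= sumR (map (fun w => f (c :: w)) (filter p L)).
Proof.
  intros Hp Hf. induction L as [|a L IH]; simpl; [lra|].
  destruct (p (c :: a)) eqn:E.
  - rewrite (Hp a E). simpl. lra.
  - destruct (p a); simpl; auto. specialize (Hf a). lra.
Qed.

Lemma sumR_filter_flat (f : word -> R) (p : word -> bool) (h : nat -> list word) l :
  sumR (map f (filter p (flat_map h l))) = sumR (map (fun i => sumR (map f (filter p (h i)))) l).
Proof.
  induction l as [|a l IH]; simpl; [lra|]. rewrite filter_app, map_app, sumR_app, IH. lra.
Qed.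

Lemma Hm_one r v k i x m : (0 < r)%nat ->
  Hm r v k (One i :: x) m <= Hm r v k x m +
    (if andb (Nat.eqb m (size (One i :: x))) (bad v k (One i :: x)) then 1 else 0).
Proof.
  intros Hr. unfold Hm.
  rewrite (sumR_map_ext _ (fun u => P r x u + (if word_eqb u (One i :: x) then 1 else 0)))
    by (intros; apply P_one; auto).
  rewrite sumR_map_plus. apply Rplus_le_compat_l.
  destruct (Nat.eqb_spec m (size (One i :: x))) as [Hm|Hm];
  destruct (bad v k (One i :: x)) eqn:Eb; simpl andb.
  - apply sumR_indicator; [apply NoDup_filter, wos_nodup|lra].
  - rewrite (sumR_map_ext _ (fun _ => 0)). { clear. induction (filter _ _); simpl; lra. }
    intros u Hu. destruct (word_eqb u (One i :: x)) eqn:E; auto.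
    apply word_eqb_eq in E; subst u. apply filter_In in Hu as [_ Hu]. congruence.
  - rewrite (sumR_map_ext _ (fun _ => 0)). { clear. induction (filter _ _); simpl; lra. }
    intros u Hu. destruct (word_eqb u (One i :: x)) eqn:E; auto.
    apply word_eqb_eq in E; subst u. apply filter_In in Hu as [Hu _]. apply wos_size in Hu. congruence.
  - rewrite (sumR_map_ext _ (fun _ => 0)). { clear. induction (filter _ _); simpl; lra. }
    intros u Hu. destruct (word_eqb u (One i :: x)) eqn:E; auto.
    apply word_eqb_eq in E; subst u. apply filter_In in Hu as [Hu _]. apply wos_size in Hu. congruence.
Qed.

Definition Hsh (r : nat) (v : inf_word) (k : nat) (x : word) (m : nat) : R :=
  match m with
  | O => 0
  | S m' => Hm r v k x m' / INR (size x + 1) +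
      match m' with O => 0 | S m'' => INR (S m'') * Hm r v k x m'' / INR (size x + 1) end
  end.

Lemma Hm_two r v k x m : (0 < r)%nat ->
  Hm r v k (Two :: x) m <= INR (size x + 1 - m) / INR (size x + 1) * Hm r v k x m + Hsh r v k x m.
Proof.
  intros Hr. unfold Hm at 1.
  assert (Hg: 0 < INR (size x + 1)) by (apply lt_0_INR; lia).
  pose proof (INR_pos_nat _ (dr_nil_pos r x Hr)) as HW.
  pose proof (INR_pos_nat r Hr) as HR.
  set (T := fun u => INR (dr r [] u) * INR (tl_dr r u x) / (INR r * INR (size x + 1) * INR (dr r [] x))).
  rewrite (sumR_map_ext _ (fun u => INR (size x + 1 - m) / INR (size x + 1) * P r x u + T u)).
  2:{ intros u Hu. apply filter_In in Hu as [Hu _].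
      rewrite P_two; auto. apply wos_size in Hu. rewrite Hu. reflexivity.
      apply wos_valid in Hu. destruct u as [|[j|] u]; simpl; auto. apply (Hu (One j)). left; auto. }
  rewrite sumR_map_plus, sumR_map_scal. fold (Hm r v k x m). apply Rplus_le_compat_l.
  assert (Tnn: forall u, 0 <= T u).
  { intros u. unfold T, Rdiv. apply Rmult_le_pos. apply Rmult_le_pos; apply pos_INR.
    apply Rlt_le, Rinv_0_lt_compat. apply Rmult_lt_0_compat; [apply Rmult_lt_0_compat|]; auto. }
  destruct m as [|m'].
  - simpl. unfold T. destruct (bad v k []); simpl; [|lra].
    unfold Rdiv. rewrite Rmult_0_r, Rmult_0_l. lra.
  - cbn [words_of_size Hsh]. rewrite filter_app, map_app, sumR_app.
    apply Rplus_le_compat.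
    + rewrite sumR_filter_flat.
      apply Rle_trans with (sumR (map (fun i : nat => Hm r v k x m' / INR r / INR (size x + 1)) (seq 0 r))).
      * apply sumR_map_le. intros i _.
        eapply Rle_trans. apply sumR_filter_cons_le; auto. apply bad_cons.
        unfold Hm. rewrite !sumR_map_div. apply Req_le.
        apply sumR_map_ext. intros w _. unfold T, P. simpl tl_dr. rewrite dr_nil_one.
        field. repeat split; lra.
      * rewrite sumR_const_seq. right. field. lra.
    + destruct m' as [|m'']. simpl. lra.
      eapply Rle_trans. apply sumR_filter_cons_le; auto. apply bad_cons.
      unfold Hm. rewrite sumR_map_mulr, !sumR_map_div. apply Req_le.
      apply sumR_map_ext. intros w Hw. apply filter_In in Hw as [Hw _]. apply wos_size in Hw.
      unfold T, P. simpl tl_dr. rewrite dr_nil_two, !mult_INR, Hw.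
      replace (m'' + 1)%nat with (S m'') by lia.
      field. repeat split; lra.
Qed.

Fixpoint sumto (f : nat -> R) (n : nat) : R :=
  match n with O => 0 | S n' => sumto f n' + f n' end.

Lemma sumto_ext f g n : (forall m, (m < n)%nat -> f m = g m) -> sumto f n = sumto g n.
Proof. induction n; simpl; intros H; auto. rewrite IHn by auto. rewrite H by lia. auto. Qed.

Lemma sumto_le f g n : (forall m, (m < n)%nat -> f m <= g m) -> sumto f n <= sumto g n.
Proof. induction n; simpl; intros H; [lra|]. assert (f n <= g n) by auto.
  assert (sumto f n <= sumto g n) by auto. lra. Qed.

Lemma sumto_plus f g n : sumto (fun m => f m + g m) n = sumto f n + sumto g n.
Proof. induction n; simpl; [lra|]. rewrite IHn; lra. Qed.

Lemma sumto_scal c f n : sumto (fun m => c * f m) n = c * sumto f n.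
Proof. induction n; simpl; [lra|]. rewrite IHn; lra. Qed.

Lemma sumto_shift f n : sumto (fun m => match m with O => 0 | S m' => f m' end) (S n) = sumto f n.
Proof. induction n. simpl; lra.
  change (sumto (fun m => match m with O => 0 | S m' => f m' end) (S (S n))) with
    (sumto (fun m => match m with O => 0 | S m' => f m' end) (S n) + f n).
  rewrite IHn. reflexivity. Qed.

Lemma sumto_nonneg f n : (forall m, (m < n)%nat -> 0 <= f m) -> 0 <= sumto f n.
Proof. induction n; simpl; intros H; [lra|]. assert (0 <= f n) by auto.
  assert (0 <= sumto f n) by auto. lra. Qed.

Lemma sumto_mono f n n' : (n <= n')%nat -> (forall m, (m < n')%nat -> 0 <= f m) -> sumto f n <= sumto f n'.
Proof. intros Hn. induction Hn; intros H; [lra|]. simpl. assert (0 <= f m) by (apply H; lia).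
  assert (sumto f n <= sumto f m) by (apply IHHn; intros; apply H; lia). lra. Qed.

Lemma sumto_ind a c : sumto (fun m => if Nat.eqb m a then c else 0) (S a) = c.
Proof.
  simpl. rewrite Nat.eqb_refl. rewrite (sumto_ext _ (fun _ => 0)).
  - clear. induction a; simpl; lra.
  - intros m Hm. destruct (Nat.eqb_spec m a); [lia|auto].
Qed.

Lemma Hm_zero r v k x m : (size x < m)%nat -> Hm r v k x m = 0.
Proof.
  intros H. unfold Hm. rewrite (sumR_map_ext _ (fun _ => 0)).
  - clear. induction (filter _ _); simpl; lra.
  - intros u Hu. apply filter_In in Hu as [Hu _]. apply wos_size in Hu. unfold P.
    rewrite (dr_lt r u x) by lia. simpl. unfold Rdiv. lra.
Qed.

Definition Htot (r : nat) (v : inf_word) (k : nat) (y : word) : R :=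
  sumto (Hm r v k y) (size y + 1).

Lemma Htot_two r v k x : (0 < r)%nat ->
  Htot r v k (Two :: x) <= (1 + 2 / INR (size x + 1)) * Htot r v k x.
Proof.
  intros Hr. unfold Htot. rewrite size_cons. simpl digit.
  assert (Hg: 0 < INR (size x + 1)) by (apply lt_0_INR; lia).
  set (g := INR (size x + 1)) in *.
  set (T := Hm r v k x).
  eapply Rle_trans.
  { apply sumto_le. intros m _. apply Hm_two; auto. }
  fold T. rewrite sumto_plus.
  replace (2 + size x + 1)%nat with (S (S (size x + 1))) by lia.
  assert (E: forall m, (m < S (S (size x + 1)))%nat -> Hsh r v k x m =
     (match m with O => 0 | S m' => T m' / g end) +
     (match m with O => 0 | S m' => match m' with O => 0 | S m'' => INR (S m'') * T m'' / g end end)).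
  { intros [|[|m]] _; simpl; fold T g; lra. }
  rewrite (sumto_ext _ _ _ E).
  rewrite sumto_plus, sumto_shift, sumto_shift.
  rewrite (sumto_shift (fun m'' => INR (S m'') * T m'' / g)).
  assert (Tz: forall m, (size x < m)%nat -> T m = 0) by (intros; apply Hm_zero; auto).
  simpl (sumto _ (S (S _))). simpl (sumto (fun m => T m / g) (S _)).
  rewrite (Tz (size x + 1)%nat) by lia. rewrite (Tz (S (size x + 1))) by lia.
  unfold Rdiv. rewrite !Rmult_0_l, !Rmult_0_r, !Rplus_0_r.
  rewrite <- !sumto_plus. rewrite <- sumto_scal.
  apply Req_le. apply sumto_ext. intros m Hm.
  rewrite minus_INR by lia. unfold g. rewrite S_INR, plus_INR. simpl (INR 1).
  field. pose proof (pos_INR (size x)); lra.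
Qed.

Lemma Htot_one r v k i x : (0 < r)%nat ->
  Htot r v k (One i :: x) <= Htot r v k x + (if bad v k (One i :: x) then 1 else 0).
Proof.
  intros Hr. unfold Htot. rewrite size_cons. simpl digit.
  eapply Rle_trans. { apply sumto_le. intros m _. apply Hm_one; auto. }
  rewrite sumto_plus. replace (1 + size x + 1)%nat with (S (size x + 1)) by lia.
  rewrite size_cons. simpl digit.
  replace (1 + size x)%nat with (size x + 1)%nat by lia.
  destruct (bad v k (One i :: x)).
  - rewrite (sumto_ext (fun m => if andb (Nat.eqb m (size x + 1)) true then 1 else 0)
       (fun m => if Nat.eqb m (size x + 1) then 1 else 0)).
    2:{ intros m _. destruct (Nat.eqb m (size x + 1)); reflexivity. }
    rewrite sumto_ind. simpl. rewrite Hm_zero by lia. lra.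
  - rewrite (sumto_ext (fun m => if andb (Nat.eqb m (size x + 1)) false then 1 else 0) (fun _ => 0)).
    2:{ intros m _. destruct (Nat.eqb m (size x + 1)); reflexivity. }
    simpl. rewrite Hm_zero by lia. assert (sumto (fun _ => 0) (size x + 1) = 0).
    { clear. induction (size x + 1)%nat; simpl; lra. } lra.
Qed.

Fixpoint Pr (y : word) : R :=
  match y with [] => 1 | One _ :: x => Pr x | Two :: x => (1 + 2 / INR (size x + 1)) * Pr x end.

Fixpoint bcnt (v : inf_word) (k : nat) (y : word) : nat :=
  match y with [] => 0%nat | a :: x => (bcnt v k x + if bad v k (a :: x) then 1 else 0)%nat end.

Lemma Pr_ge1 y : 1 <= Pr y.
Proof.
  induction y as [|[i|] x IH]; simpl; [lra|auto|].
  assert (0 <= 2 / INR (size x + 1)).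
  { unfold Rdiv. apply Rmult_le_pos. lra. apply Rlt_le, Rinv_0_lt_compat, lt_0_INR; lia. }
  nra.
Qed.

Lemma Htot_bound r v k y : (0 < r)%nat -> Htot r v k y <= Pr y * (1 + INR (bcnt v k y)).
Proof.
  intros Hr. induction y as [|[i|] x IH].
  - unfold Htot. simpl. unfold Hm. simpl. destruct (bad v k []); simpl.
    + unfold P. rewrite dr_nil_nil. simpl. lra.
    + lra.
  - eapply Rle_trans. apply Htot_one; auto. simpl Pr. cbn [bcnt].
    rewrite plus_INR. pose proof (Pr_ge1 x). pose proof (pos_INR (bcnt v k x)).
    destruct (bad v k (One i :: x)); simpl; nra.
  - eapply Rle_trans. apply Htot_two; auto. simpl Pr. cbn [bcnt].
    assert (0 <= 2 / INR (size x + 1)).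
    { unfold Rdiv. apply Rmult_le_pos. lra. apply Rlt_le, Rinv_0_lt_compat, lt_0_INR; lia. }
    set (c := 2 / INR (size x + 1)) in *. rewrite plus_INR.
    pose proof (Pr_ge1 x). pose proof (pos_INR (bcnt v k x)).
    assert (0 <= INR (if bad v k (Two :: x) then 1%nat else 0%nat)) by apply pos_INR.
    assert ((1 + c) * Htot r v k x <= (1 + c) * (Pr x * (1 + INR (bcnt v k x)))) by (apply Rmult_le_compat_l; lra).
    assert (0 <= (1 + c) * Pr x * INR (if bad v k (Two :: x) then 1%nat else 0%nat)).
    { apply Rmult_le_pos; [apply Rmult_le_pos|]; lra. }
    nra.
Qed.

Lemma size_app x y : size (x ++ y) = (size x + size y)%nat.
Proof. induction x as [|a x IH]; [reflexivity|]. cbn [app]. rewrite !size_cons, IH. lia. Qed.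

Lemma size_rev x : size (rev x) = size x.
Proof. induction x as [|a x IH]; [reflexivity|]. cbn [rev]. rewrite size_app, IH, !size_cons.
  change (size []) with 0%nat. lia. Qed.

Lemma size_ge_length x : (length x <= size x)%nat.
Proof. induction x as [|a x IH]; [simpl; lia|]. rewrite size_cons. destruct a; simpl; lia. Qed.

Lemma gs_app l1 l2 acc : gs (l1 ++ l2) acc = gs l1 acc ++ gs l2 (acc + size l1).
Proof.
  revert acc; induction l1 as [|a l1 IH]; intros acc.
  - simpl. rewrite Nat.add_0_r; auto.
  - cbn [app]. rewrite size_cons. destruct a; simpl digit; cbn [gs]; rewrite IH.
    + f_equal. f_equal. lia.
    + simpl. f_equal. f_equal. f_equal. lia.
Qed.

Lemma pi_of_gs_app a b : pi_of_gs (a ++ b) = pi_of_gs a * pi_of_gs b.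
Proof. induction a; simpl; [lra|]. rewrite IHa. lra. Qed.

Definition fac (g : nat) : R := if Nat.ltb 1 g then (INR g - 1) / INR g else 1.

Lemma pi_nil : pi [] = 1.
Proof. reflexivity. Qed.

Lemma pi_one i x : pi (One i :: x) = pi x.
Proof. unfold pi. simpl. rewrite gs_app. simpl. rewrite app_nil_r. auto. Qed.

Lemma pi_two x : pi (Two :: x) = fac (size x + 1) * pi x.
Proof. unfold pi. cbn [rev]. rewrite gs_app, pi_of_gs_app, size_rev.
  change (gs [Two] (0 + size x)) with [S (0 + size x)]. unfold pi_of_gs at 2. cbn [fold_right].
  replace (S (0 + size x)) with (size x + 1)%nat by lia. unfold fac. lra. Qed.

Lemma fac_range g : 0 < fac g <= 1.
Proof. unfold fac. destruct (Nat.ltb_spec 1 g). 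
  - assert (1 < INR g) by (apply (lt_INR 1); auto). split.
    + apply Rdiv_lt_0_compat; lra.
    + apply Rmult_le_reg_r with (INR g). lra. unfold Rdiv. rewrite Rmult_assoc, Rinv_l by lra. lra.
  - lra. Qed.

Lemma pi_range y : 0 < pi y <= 1.
Proof.
  induction y as [|[i|] x IH]. rewrite pi_nil; lra. rewrite pi_one; auto.
  rewrite pi_two. pose proof (fac_range (size x + 1)). split; [apply Rmult_lt_0_compat|]; nra.
Qed.

Lemma Pr_pi y : Pr y * (pi y * pi y) <= 3.
Proof.
  induction y as [|[i|] x IH].
  - simpl Pr. rewrite pi_nil. lra.
  - simpl Pr. rewrite pi_one. auto.
  - destruct x as [|a x'].
    + simpl Pr. rewrite pi_two, pi_nil. unfold fac. simpl. lra.
    + remember (a :: x') as x eqn:Ex.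
      assert (Hs: (1 <= size x)%nat) by (rewrite Ex, size_cons; destruct a; simpl; lia).
      simpl Pr. rewrite pi_two. unfold fac.
      replace (Nat.ltb 1 (size x + 1)) with true by (symmetry; apply Nat.ltb_lt; lia).
      assert (Hg: 2 <= INR (size x + 1)) by (replace 2 with (INR 2) by (simpl; lra); apply le_INR; lia).
      set (g := INR (size x + 1)) in *.
      assert (Hf: (1 + 2 / g) * ((g - 1) / g * ((g - 1) / g)) <= 1).
      { unfold Rdiv. replace ((1 + 2 * / g) * ((g - 1) * / g * ((g - 1) * / g))) with
          ((g + 2) * (g - 1) * (g - 1) / (g * g * g)) by (field; lra).
        apply Rmult_le_reg_r with (g * g * g). nra. unfold Rdiv. rewrite Rmult_assoc, Rinv_l by nra. nra. }
      pose proof (Pr_ge1 x). pose proof (pi_range x).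
      match goal with |- ?L <= 3 => replace L with
        (((1 + 2 / g) * ((g - 1) / g * ((g - 1) / g))) * (Pr x * (pi x * pi x))) by (unfold g; ring) end.
      assert (0 <= Pr x * (pi x * pi x)) by nra.
      assert (0 <= (1 + 2 / g) * ((g - 1) / g * ((g - 1) / g))).
      { apply Rmult_le_pos. assert (0 <= 2/g) by (apply Rmult_le_pos; [lra|apply Rlt_le, Rinv_0_lt_compat; lra]). lra.
        assert (0 <= (g - 1) / g) by (apply Rmult_le_pos; [lra|apply Rlt_le, Rinv_0_lt_compat; lra]). nra. }
      apply Rle_trans with (1 * (Pr x * (pi x * pi x))); [apply Rmult_le_compat_r; lra | lra].
Qed.

Fixpoint Q (y : word) (s k : nat) : R :=
  match y with
  | [] => 1
  | One _ :: x => Q x s k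
  | Two :: x => (if Nat.leb s (size x) then 1 - INR k / INR (size x + 1) else 1) * Q x s k
  end.

Lemma pi_Q y : pi y = Q y 1 1.
Proof.
  induction y as [|[i|] x IH]. reflexivity. rewrite pi_one; simpl; auto.
  rewrite pi_two.
  change (Q (Two :: x) 1 1) with ((if Nat.leb 1 (size x) then 1 - INR 1 / INR (size x + 1) else 1) * Q x 1 1).
  rewrite IH. unfold fac. f_equal.
  destruct (Nat.ltb_spec 1 (size x + 1)); destruct (Nat.leb_spec 1 (size x)); try lia; auto.
  change (INR 1) with 1. field. apply Rgt_not_eq, lt_0_INR; lia.
Qed.

Lemma Q_big y s k : (size y <= s)%nat -> Q y s k = 1.
Proof.
  induction y as [|[i|] x IH]; intros H; simpl; auto.
  - apply IH. rewrite size_cons in H. simpl in H. lia.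
  - rewrite size_cons in H. simpl in H. destruct (Nat.leb_spec s (size x)); [lia|].
    rewrite IH by lia. lra.
Qed.

Lemma Q_split p z s k : (s <= size z)%nat -> Q (p ++ z) s k = Q (p ++ z) (size z) k * Q z s k.
Proof.
  intros Hs. induction p as [|[i|] p IH].
  - simpl. rewrite (Q_big z (size z)) by lia. lra.
  - simpl. auto.
  - cbn [app Q]. rewrite IH. rewrite size_app.
    destruct (Nat.leb_spec s (size p + size z)); destruct (Nat.leb_spec (size z) (size p + size z)); try lia.
    ring.
Qed.

Lemma Q_range y s k : (k <= s + 1)%nat -> 0 <= Q y s k <= 1.
Proof.
  intros Hk. induction y as [|[i|] x IH]; simpl; [lra|auto|].
  destruct (Nat.leb_spec s (size x)); [|lra].
  assert (Hg: 0 < INR (size x + 1)) by (apply lt_0_INR; lia).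
  assert (INR k <= INR (size x + 1)) by (apply le_INR; lia).
  assert (0 <= INR k) by apply pos_INR.
  assert (0 <= INR k / INR (size x + 1) <= 1).
  { split. apply Rmult_le_pos; [lra|apply Rlt_le, Rinv_0_lt_compat; lra].
    apply Rmult_le_reg_r with (INR (size x + 1)); auto. unfold Rdiv. rewrite Rmult_assoc, Rinv_l by lra. lra. }
  nra.
Qed.

Fixpoint Sx (y : word) (s : nat) : R :=
  match y with
  | [] => 0
  | One _ :: x => Sx x s
  | Two :: x => (if Nat.leb s (size x) then 1 / INR (size x + 1) else 0) + Sx x s
  end.

Lemma Sx_nonneg y s : 0 <= Sx y s.
Proof. induction y as [|[i|] x IH]; simpl; auto; [lra|].
  destruct (Nat.leb s (size x)); [|lra].
  assert (0 < INR (size x + 1)) by (apply lt_0_INR; lia).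
  assert (0 <= 1 / INR (size x + 1)) by (apply Rmult_le_pos; [lra|apply Rlt_le, Rinv_0_lt_compat; lra]). lra. Qed.

Lemma Q1_Sx y s : Q y s 1 * (1 + Sx y s) <= 1.
Proof.
  induction y as [|[i|] x IH]; simpl; [lra|auto|].
  pose proof (Q_range x s 1 ltac:(lia)). pose proof (Sx_nonneg x s).
  destruct (Nat.leb_spec s (size x)); [|lra].
  assert (Hg: 1 <= INR (size x + 1)) by (replace 1 with (INR 1) by reflexivity; apply le_INR; lia).
  set (g := INR (size x + 1)) in *.
  replace (INR 1) with 1 by reflexivity.
  set (t := 1 / g).
  assert (0 <= t <= 1).
  { unfold t. split. apply Rmult_le_pos; [lra|apply Rlt_le, Rinv_0_lt_compat; lra].
    apply Rmult_le_reg_r with g; [lra|]. unfold Rdiv. rewrite Rmult_assoc, Rinv_l by lra. lra. }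
  replace (1 / g) with t by reflexivity.
  assert ((1 - t) * (1 + (t + Sx x s)) <= 1 + Sx x s) by nra.
  apply Rle_trans with (Q x s 1 * (1 + Sx x s)); auto.
  replace ((1 - t) * Q x s 1 * (1 + (t + Sx x s))) with (Q x s 1 * ((1 - t) * (1 + (t + Sx x s)))) by ring.
  apply Rmult_le_compat_l; lra.
Qed.

Lemma inv_le1 a : 1 <= a -> 1 / a <= 1.
Proof. intros H. unfold Rdiv. rewrite Rmult_1_l. rewrite <- Rinv_1. apply Rinv_le_contravar; lra. Qed.

Lemma pow_le1 a n : 0 <= a <= 1 -> a ^ n <= 1.
Proof. intros H. rewrite <- (pow1 n). apply pow_incr. lra. Qed.

Lemma pow_err (x : R) (k : nat) : 0 <= x <= 1 ->
  0 <= (1 - x) ^ k - (1 - INR k * x) <= INR k * INR k * (x * x).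
Proof.
  intros Hx. induction k as [|k IH].
  - simpl. lra.
  - rewrite S_INR. simpl pow.
    set (D := (1 - x) ^ k - (1 - INR k * x)) in *.
    replace ((1 - x) * (1 - x) ^ k - (1 - (INR k + 1) * x)) with ((1 - x) * D + INR k * (x * x))
      by (unfold D; ring).
    pose proof (pos_INR k).
    assert (0 <= (1 - x) * D <= D) by nra.
    assert (0 <= INR k * (x * x)) by (apply Rmult_le_pos; nra).
    nra.
Qed.

Lemma Q_err y s k : (k <= s + 1)%nat ->
  Rabs (Q y s k - (Q y s 1) ^ k) <= INR k * INR k / INR (s + 1) * Sx y s.
Proof.
  intros Hk. assert (Hs1: 0 < INR (s + 1)) by (apply lt_0_INR; lia).
  assert (Hc: 0 <= INR k * INR k / INR (s + 1)).
  { apply Rmult_le_pos; [apply Rmult_le_pos; apply pos_INR|apply Rlt_le, Rinv_0_lt_compat; lra]. }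
  induction y as [|[i|] x IH]; simpl Q; simpl Sx.
  - rewrite pow1. rewrite Rminus_diag, Rabs_R0. lra.
  - auto.
  - destruct (Nat.leb_spec s (size x)) as [Hle|Hgt].
    2:{ rewrite !Rmult_1_l. rewrite Rplus_0_l. auto. }
    assert (Hg: INR (s + 1) <= INR (size x + 1)) by (apply le_INR; lia).
    set (g := INR (size x + 1)) in *.
    set (t := 1 / g).
    assert (Ht: 0 <= t <= 1 / INR (s + 1)).
    { unfold t. split. apply Rmult_le_pos; [lra|apply Rlt_le, Rinv_0_lt_compat; lra].
      unfold Rdiv. rewrite !Rmult_1_l. apply Rinv_le_contravar; lra. }
    assert (Ht1: t <= 1).
    { apply Rle_trans with (1 / INR (s+1)); [lra|]. apply inv_le1.
      replace 1 with (INR 1) by reflexivity. apply le_INR. lia. }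
    assert (Hkt: INR k * t <= 1).
    { apply Rle_trans with (INR k * (1 / INR (s+1))). apply Rmult_le_compat_l; [apply pos_INR|lra].
      unfold Rdiv. rewrite Rmult_1_l. apply Rmult_le_reg_r with (INR (s+1)); auto.
      rewrite Rmult_assoc, Rinv_l by lra. rewrite Rmult_1_l, Rmult_1_r. apply le_INR; lia. }
    replace (INR k / g) with (INR k * t) by (unfold t, Rdiv; ring).
    replace (INR 1 / g) with t by (unfold t; simpl; reflexivity).
    replace (1 / g) with t by reflexivity.
    pose proof (Q_range x s k Hk) as HQk. pose proof (Q_range x s 1 ltac:(lia)) as HQ1.
    pose proof (pow_err t k (conj (proj1 Ht) Ht1)) as Pe.
    rewrite Rpow_mult_distr.
    assert (HA: 0 <= Q x s 1 ^ k <= 1) by (split; [apply pow_le; lra|apply pow_le1; lra]).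
    set (A := Q x s 1 ^ k) in *. set (Qk := Q x s k) in *.
    set (D := (1 - t) ^ k - (1 - INR k * t)) in *.
    set (c := INR k * INR k / INR (s + 1)) in *.
    set (S := Sx x s) in *.
    assert (IH1: Qk - A <= c * S) by (eapply Rle_trans; [apply Rle_abs|exact IH]).
    assert (IH2: -(Qk - A) <= c * S) by (eapply Rle_trans; [apply Rle_abs|rewrite Rabs_Ropp; exact IH]).
    assert (Hkt0: 0 <= INR k * t) by (apply Rmult_le_pos; [apply pos_INR|lra]).
    assert (HD: D * A <= c * t).
    { apply Rle_trans with (INR k * INR k * (t * t)). 
      - apply Rle_trans with (D * 1). apply Rmult_le_compat_l; lra. lra.
      - unfold c. unfold Rdiv. replace (INR k * INR k * / INR (s + 1) * t) with (INR k * INR k * (t * (1 / INR (s+1)))) by (unfold Rdiv; ring).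
        apply Rmult_le_compat_l. apply Rmult_le_pos; apply pos_INR. apply Rmult_le_compat_l; lra. }
    assert (HDA: 0 <= D * A) by (apply Rmult_le_pos; lra).
    assert (HcS: 0 <= c * S) by (apply Rmult_le_pos; [exact Hc|apply Sx_nonneg]).
    assert (P1: 0 <= (1 - INR k * t) * (c * S - (Qk - A))) by (apply Rmult_le_pos; lra).
    assert (P2: 0 <= (1 - INR k * t) * (c * S + (Qk - A))) by (apply Rmult_le_pos; lra).
    assert (P3: 0 <= INR k * t * (c * S)) by (apply Rmult_le_pos; lra).
    replace ((1 - INR k * t) * Qk - (1 - t) ^ k * A) with ((1 - INR k * t) * (Qk - A) - D * A) by (unfold D; ring).
    apply Rabs_le. split; nra.
Qed.

Definition VK (v : inf_word) (K : nat) : word := rev (map v (seq 0 K)).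

Lemma VK_S v K : VK v (S K) = v K :: VK v K.
Proof. unfold VK. rewrite seq_S, map_app, rev_app_distr. reflexivity. Qed.

Lemma VK_size v K : (K <= size (VK v K))%nat.
Proof. induction K. simpl; lia. rewrite VK_S, size_cons. destruct (v K); simpl; lia. Qed.

Lemma vn_split (vn : nat -> word) v : letterwise_cvg vn v ->
  forall K, exists N, forall n, (N <= n)%nat -> exists p, vn n = p ++ VK v K.
Proof.
  intros H K. destruct (H K) as [N HN]. exists N. intros n Hn.
  destruct (HN n Hn) as [Hlen Hnth].
  set (l := rev (vn n)).
  assert (E: firstn K l = map v (seq 0 K)).
  { apply nth_ext with Two Two.
    - rewrite length_firstn, length_map, length_seq. unfold l. rewrite length_rev. lia.
    - intros j Hj. rewrite length_firstn in Hj. rewrite nth_firstn.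
      replace (j <? K) with true by (symmetry; apply Nat.ltb_lt; lia).
      unfold l. rewrite Hnth by lia.
      assert (j < length (seq 0 K))%nat by (rewrite length_seq; lia).
      rewrite (nth_indep _ _ (v 0%nat)) by (rewrite length_map; auto).
      rewrite map_nth. rewrite seq_nth by lia. reflexivity. }
  exists (rev (skipn K l)).
  rewrite <- (rev_involutive (vn n)). fold l.
  rewrite <- (firstn_skipn K l) at 1. rewrite rev_app_distr, E. reflexivity.
Qed.

Fixpoint ones_cnt (v : inf_word) (j K : nat) : nat :=
  match K with O => 0%nat | S K' => ((if is_one (v j) then 1 else 0) + ones_cnt v (S j) K')%nat end.

Lemma e_aux_lower v j K l : (ones_cnt v j K <= e_aux (map v (seq j K) ++ l) v j)%nat.
Proof.
  revert j; induction K; intros j; simpl. lia.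
  assert (letter_eqb (v j) (v j) = true) by (apply letter_eqb_eq; auto). rewrite H.
  specialize (IHK (S j)). lia.
Qed.

Lemma e_lower v p K : (ones_cnt v 0 K <= e (p ++ VK v K) v)%nat.
Proof. unfold e, VK. rewrite rev_app_distr, rev_involutive. apply e_aux_lower. Qed.

Lemma bcnt_len v k y : (bcnt v k y <= length y)%nat.
Proof. induction y; simpl; auto. destruct (bad v k (a :: y)); lia. Qed.

Lemma bcnt_bound v k K p : (k <= ones_cnt v 0 K)%nat -> (bcnt v k (p ++ VK v K) <= K)%nat.
Proof.
  intros Hk. induction p as [|a p IH].
  - simpl. eapply Nat.le_trans. apply bcnt_len. unfold VK. rewrite length_rev, length_map, length_seq. lia.
  - change ((a :: p) ++ VK v K) with (a :: (p ++ VK v K)). simpl.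
    replace (bad v k (a :: p ++ VK v K)) with false. lia.
    symmetry. unfold bad. apply Nat.ltb_ge. pose proof (e_lower v (a :: p) K). simpl in H. lia.
Qed.

Definition spart (v : inf_word) (N : nat) : R := pi_of_gs (gs (map v (seq 0 N)) 0).

Lemma spart_VK v K : spart v K = pi (VK v K).
Proof. unfold spart, pi, VK. rewrite rev_involutive. auto. Qed.

Lemma pi_of_gs_range l : 0 < pi_of_gs l <= 1.
Proof. induction l; simpl; [lra|]. pose proof (fac_range a). unfold fac in H.
  split; [apply Rmult_lt_0_compat|]; nra. Qed.

Lemma spart_decr v N : spart v (S N) <= spart v N.
Proof. rewrite !spart_VK, VK_S. pose proof (pi_range (VK v N)).
  destruct (v N). rewrite pi_one; lra. rewrite pi_two. pose proof (fac_range (size (VK v N) + 1)). nra. Qed.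

Lemma spart_lim v : is_lim_seq (spart v) (pi_inf v).
Proof.
  assert (Hd: forall n, spart v (S n) <= spart v n) by apply spart_decr.
  assert (Hf: ex_finite_lim_seq (spart v)).
  { apply (ex_finite_lim_seq_decr _ 0); auto. intros n. rewrite spart_VK. pose proof (pi_range (VK v n)). lra. }
  destruct Hf as [l Hl]. unfold pi_inf. fold (spart v).
  rewrite (is_lim_seq_unique _ _ Hl). simpl. auto.
Qed.

Lemma spart_ge v N : pi_inf v <= spart v N.
Proof. apply is_lim_seq_decr_compare. apply spart_lim. apply spart_decr. Qed.

Lemma ones_cnt_last v j K : ones_cnt v j (S K) = (ones_cnt v j K + if is_one (v (j + K)%nat) then 1 else 0)%nat.
Proof.
  revert j; induction K; intros j. simpl. replace (j + 0)%nat with j by lia. destruct (is_one (v j)); lia.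
  change (ones_cnt v j (S (S K))) with ((if is_one (v j) then 1 else 0) + ones_cnt v (S j) (S K))%nat.
  rewrite IHK. simpl. replace (S (j + K)) with (j + S K)%nat by lia.
  destruct (is_one (v j)); destruct (is_one (v (j + S K)%nat)); lia.
Qed.

Lemma ones_cnt_mono v K K' : (K <= K')%nat -> (ones_cnt v 0 K <= ones_cnt v 0 K')%nat.
Proof. intros H; induction H; auto. rewrite ones_cnt_last. lia. Qed.

Lemma repeat_VK v J n : (forall j, (J <= j)%nat -> v j = Two) ->
  VK v (J + n) = repeat Two n ++ VK v J.
Proof.
  intros H. induction n. rewrite Nat.add_0_r. reflexivity.
  replace (J + S n)%nat with (S (J + n)) by lia. rewrite VK_S, IHn, H by lia. reflexivity.
Qed.

Lemma pi_twos_bound n y : (1 <= size y)%nat ->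
  pi (repeat Two n ++ y) * pi (repeat Two n ++ y) <= INR (size y) / INR (size y + 2 * n).
Proof.
  intros Hy. induction n.
  - simpl. rewrite Nat.add_0_r. pose proof (pi_range y).
    assert (0 < INR (size y)) by (apply lt_0_INR; lia).
    unfold Rdiv. rewrite Rinv_r by lra. nra.
  - cbn [repeat app]. rewrite pi_two, size_app.
    assert (Hsr: size (repeat Two n) = (2 * n)%nat) by (clear; induction n; [reflexivity|]; cbn [repeat]; rewrite size_cons, IHn; simpl; lia).
    rewrite Hsr in *. unfold fac.
    replace (Nat.ltb 1 (2 * n + size y + 1)) with true by (symmetry; apply Nat.ltb_lt; lia).
    set (a := INR (size y)). 
    assert (Ha: 1 <= a) by (unfold a; replace 1 with (INR 1) by reflexivity; apply le_INR; lia).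
    assert (I2: INR 2 = 2) by (simpl; lra).
    replace (INR (2 * n + size y + 1)) with (a + 2 * INR n + 1) by (unfold a; rewrite !plus_INR, mult_INR, I2; change (INR 1) with 1; ring).
    replace (INR (size y + 2 * S n)) with (a + 2 * INR n + 2) by (unfold a; rewrite !plus_INR, mult_INR, I2, S_INR; ring).
    replace (INR (size y + 2 * n)) with (a + 2 * INR n) in IHn by (unfold a; rewrite !plus_INR, mult_INR, I2; ring).
    pose proof (pos_INR n).
    set (b := a + 2 * INR n) in *.
    assert (Hb: a <= b) by (unfold b; lra).
    fold a in IHn.
    set (P := pi (repeat Two n ++ y)) in *.
    assert (HP: 0 <= P * P) by nra.
    clearbody P b a.
    replace ((b + 1 - 1) / (b + 1) * P * ((b + 1 - 1) / (b + 1) * P)) with ((b / (b+1)) * (b / (b+1)) * (P * P)) by (field; lra).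
    apply Rle_trans with ((b / (b+1)) * (b / (b+1)) * (a / b)).
    + apply Rmult_le_compat_l; auto. assert (0 <= b / (b+1)) by (apply Rmult_le_pos; [lra|apply Rlt_le, Rinv_0_lt_compat; lra]). nra.
    + apply Rmult_le_reg_r with ((b + 1) * (b + 1) * (b + 2)). nra.
      replace (b / (b + 1) * (b / (b + 1)) * (a / b) * ((b + 1) * (b + 1) * (b + 2))) with (a * b * (b + 2)) by (field; lra).
      replace ((a / (b + 2)) * ((b + 1) * (b + 1) * (b + 2))) with (a * (b + 1) * (b + 1)) by (field; lra).
      nra.
Qed.

Lemma ones_exist v k : 0 < pi_inf v -> exists K, (k <= ones_cnt v 0 K)%nat.
Proof.
  intros Hpos. apply NNPP. intros Hno.
  assert (Hlt: forall K, (ones_cnt v 0 K < k)%nat).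
  { intros K. destruct (Nat.lt_ge_cases (ones_cnt v 0 K) k); auto. exfalso; apply Hno; eauto. }
  assert (HJ: exists J, forall j, (J <= j)%nat -> v j = Two).
  { apply NNPP. intros HnJ.
    assert (Hinf: forall J, exists j, (J <= j)%nat /\ is_one (v j) = true).
    { intros J. apply NNPP. intros Hn. apply HnJ. exists J. intros j Hj.
      destruct (v j) eqn:E; auto. exfalso. apply Hn. exists j. rewrite E. auto. }
    assert (forall c, exists K, (c <= ones_cnt v 0 K)%nat).
    { induction c. exists 0%nat; lia. destruct IHc as [K HK].
      destruct (Hinf K) as [j [Hj Ho]]. exists (S j). rewrite ones_cnt_last. simpl. rewrite Ho.
      pose proof (ones_cnt_mono v K j Hj). lia. }
    destruct (H k) as [K HK]. specialize (Hlt K). lia. }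
  destruct HJ as [J HJ].
  set (y := VK v (S J)).
  assert (Hy: (1 <= size y)%nat) by (pose proof (VK_size v (S J)); unfold y; lia).
  set (c := pi_inf v) in *.
  destruct (INR_unbounded (INR (size y) / (c * c))) as [n Hn].
  assert (Hs: c <= pi (repeat Two n ++ y)).
  { unfold y. rewrite <- (repeat_VK v (S J) n) by (intros; apply HJ; lia). rewrite <- spart_VK. apply spart_ge. }
  pose proof (pi_twos_bound n y Hy).
  assert (Hcc: c * c <= INR (size y) / INR (size y + 2 * n)) by nra.
  assert (0 < INR (size y)) by (apply lt_0_INR; lia).
  assert (0 < c * c) by nra.
  rewrite plus_INR, mult_INR in Hcc. simpl (INR 2) in Hcc.
  assert (INR n * (c * c) > INR (size y)).
  { apply Rmult_gt_reg_l with (/ (c * c)). apply Rinv_0_lt_compat; lra.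
    replace (/ (c * c) * (INR n * (c * c))) with (INR n) by (field; lra).
    unfold Rdiv in Hn. lra. }
  pose proof (pos_INR n).
  apply Rmult_le_compat_r with (r := INR (size y) + (1 + 1) * INR n) in Hcc; [|lra].
  replace (INR (size y) / (INR (size y) + (1 + 1) * INR n) * (INR (size y) + (1 + 1) * INR n)) with (INR (size y)) in Hcc by (field; lra).
  nra.
Qed.

Definition Rat (r : nat) (u y : word) : R := INR (dr r u y) / INR (dr r [] y).

Definition evalc (c : list (R * nat)) (y : word) (s : nat) : R :=
  sumR (map (fun ck => fst ck * Q y s (snd ck)) c).

Lemma Q_zero y s : Q y s 0 = 1.
Proof. induction y as [|[i|] x IH]; simpl; auto. rewrite IH.
  destruct (Nat.leb s (size x)); [|lra]. unfold Rdiv. rewrite Rmult_0_l. lra. Qed.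

Lemma evalc_nil_p x0 c : evalc c x0 (size x0) = sumR (map fst c).
Proof. unfold evalc. apply sumR_map_ext. intros ck _. rewrite Q_big by lia. lra. Qed.

Lemma valid_tail r a u : valid_word r (a :: u) -> valid_word r u.
Proof. intros H b Hb. apply H. right; auto. Qed.

Lemma valid_first_of r a u : valid_word r (a :: u) -> valid_first r (a :: u).
Proof. intros H. destruct a; simpl; auto. apply (H (One i)). left; auto. Qed.

Lemma rep r u x0 : (0 < r)%nat -> valid_word r u -> (size u <= size x0)%nat ->
  exists c, (forall ck, In ck c -> (snd ck <= size u)%nat) /\
    forall p, Rat r u (p ++ x0) = evalc c (p ++ x0) (size x0).
Proof.
  intros Hr. induction u as [|a u1 IH]; intros Hv Hs.
  - exists [(1, 0%nat)]. split.
    + intros ck [<-|[]]. simpl. lia.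
    + intros p. unfold Rat, evalc. simpl. rewrite Q_zero.
      pose proof (INR_pos_nat _ (dr_nil_pos r (p ++ x0) Hr)). field. lra.
  - assert (Hs1: (size u1 <= size x0)%nat) by (rewrite size_cons in Hs; lia).
    destruct (IH (valid_tail _ _ _ Hv) Hs1) as [c1 [Hc1 Hrep1]].
    set (m := size (a :: u1)).
    assert (Hm1: (size u1 < m)%nat) by (unfold m; rewrite size_cons; destruct a; simpl; lia).
    set (c' := map (fun ck => (fst ck / (INR r * (INR m - INR (snd ck))), snd ck)) c1).
    set (b := Rat r (a :: u1) x0 - sumR (map fst c')).
    exists ((b, m) :: c'). split.
    + intros ck [<-|Hin]. simpl. lia. unfold c' in Hin. apply in_map_iff in Hin as [ck' [<- Hin]].
      simpl. specialize (Hc1 ck' Hin). fold m. lia.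
    + induction p as [|[i|] p IHp].
      * simpl app. unfold evalc. simpl map. simpl sumR. simpl fst. simpl snd.
        rewrite (Q_big x0 (size x0)) by lia. fold (evalc c' x0 (size x0)). rewrite evalc_nil_p. unfold b. lra.
      * cbn [app]. unfold Rat. rewrite dr_one, dr_nil_one.
        rewrite (word_eqb_size (a :: u1)).
        2:{ rewrite (size_cons (One i)), size_app. simpl digit. fold m. lia. }
        rewrite Nat.add_0_r. fold (Rat r (a :: u1) (p ++ x0)). rewrite IHp.
        unfold evalc. simpl Q. reflexivity.
      * cbn [app]. set (y := p ++ x0) in *.
        assert (Hsy: (size x0 <= size y)%nat) by (unfold y; rewrite size_app; lia).
        assert (Hg: 0 < INR (size y + 1)) by (apply lt_0_INR; lia).
        pose proof (INR_pos_nat _ (dr_nil_pos r y Hr)) as HW.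
        pose proof (INR_pos_nat r Hr) as HR.
        assert (ERat: Rat r (a :: u1) (Two :: y) =
            (INR (size y + 1) - INR m) / INR (size y + 1) * Rat r (a :: u1) y
            + Rat r u1 y / (INR r * INR (size y + 1))).
        { unfold Rat. rewrite dr_two by (apply valid_first_of; auto). rewrite dr_nil_two.
          simpl tl_dr. fold m. rewrite plus_INR, !mult_INR. rewrite minus_INR by lia.
          field. repeat split; lra. }
        rewrite ERat, IHp.
        replace (Rat r u1 y) with (evalc c1 y (size x0)) by (unfold y; rewrite Hrep1; reflexivity).
        unfold evalc. cbn [map sumR fold_right fst snd].
        change (Q (Two :: y) (size x0) ?k) with
          ((if Nat.leb (size x0) (size y) then 1 - INR k / INR (size y + 1) else 1) * Q y (size x0) k).
        replace (Nat.leb (size x0) (size y)) with true by (symmetry; apply Nat.leb_le; auto).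
        unfold c'. rewrite !map_map. cbn [fst snd].
        assert (Hterm: forall ck, In ck c1 ->
          fst ck / (INR r * (INR m - INR (snd ck))) * ((1 - INR (snd ck) / INR (size y + 1)) * Q y (size x0) (snd ck)) =
          (INR (size y + 1) - INR m) / INR (size y + 1) * (fst ck / (INR r * (INR m - INR (snd ck))) * Q y (size x0) (snd ck))
          + (fst ck * Q y (size x0) (snd ck)) / (INR r * INR (size y + 1))).
        { intros ck Hin. specialize (Hc1 ck Hin).
          assert (INR (snd ck) < INR m) by (apply lt_INR; lia).
          field. repeat split; lra. }
        change (fold_right Rplus 0 ?l) with (sumR l).
        rewrite (sumR_map_ext _ _ _ Hterm). rewrite sumR_map_plus.
        rewrite <- sumR_map_mulr. rewrite <- sumR_map_div.
        field. repeat split; lra.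
Qed.

Lemma lim_pow (u : nat -> R) (l : R) k : is_lim_seq u l -> is_lim_seq (fun n => u n ^ k) (l ^ k).
Proof.
  intros H. induction k.
  - simpl. apply is_lim_seq_const.
  - simpl. apply (is_lim_seq_mult' u (fun n => u n ^ k)); auto.
Qed.

Lemma Sx_bound y s : 0 < Q y s 1 -> Sx y s <= 1 / Q y s 1.
Proof.
  intros H. pose proof (Q1_Sx y s). pose proof (Sx_nonneg y s).
  apply Rmult_le_reg_l with (Q y s 1); auto. unfold Rdiv. rewrite Rmult_1_l, Rinv_r by lra. nra.
Qed.

Lemma lim_spec (u : nat -> R) (l : R) : is_lim_seq u l -> forall e, 0 < e -> exists N, forall n, (N <= n)%nat -> Rabs (u n - l) < e.
Proof.
  intros H e He. apply is_lim_seq_spec in H. destruct (H (mkposreal e He)) as [N HN].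
  exists N. intros n Hn. apply HN; auto.
Qed.

Lemma Q_cauchy (vn : nat -> word) v beta s k :
  letterwise_cvg vn v -> 0 < pi_inf v -> 0 < beta ->
  is_lim_seq (fun n => pi (vn n)) (beta * pi_inf v) -> (1 <= s)%nat -> (k <= s)%nat ->
  ex_finite_lim_seq (fun n => Q (vn n) s k).
Proof.
  intros Hcv Hpi Hb Hlim Hs Hk.
  apply ex_lim_seq_cauchy_corr. intros [eps Heps]. simpl.
  set (c0 := beta * pi_inf v).
  assert (Hc0: 0 < c0) by (unfold c0; nra).
  destruct (INR_unbounded (8 * INR k * INR k / (c0 * eps) + INR s)) as [K HK].
  assert (Hkk: 0 <= 8 * INR k * INR k / (c0 * eps)).
  { apply Rmult_le_pos. pose proof (pos_INR k). nra. apply Rlt_le, Rinv_0_lt_compat. nra. }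
  assert (HKs: (s < K)%nat) by (apply INR_lt; lra).
  set (S := size (VK v K)).
  assert (HSK: (K <= S)%nat) by apply VK_size.
  set (PK := pi (VK v K)).
  pose proof (pi_range (VK v K)) as HPK. fold PK in HPK.
  destruct (vn_split vn v Hcv K) as [N1 HN1].
  set (rho := fun n => Q (vn n) S 1).
  set (L := c0 / PK).
  assert (HL: c0 <= L).
  { unfold L. apply Rmult_le_reg_r with PK. lra. unfold Rdiv. rewrite Rmult_assoc, Rinv_l by lra. nra. }
  assert (Hrho: is_lim_seq rho L).
  { apply is_lim_seq_ext_loc with (fun n => pi (vn n) / PK).
    - exists N1. intros n Hn. destruct (HN1 n Hn) as [p Hp]. unfold rho. rewrite Hp.
      rewrite pi_Q, (Q_split p (VK v K) 1 1) by lia. rewrite <- pi_Q. fold S PK. field. lra.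
    - apply is_lim_seq_div'; auto. apply is_lim_seq_const. lra. }
  destruct (lim_spec _ _ Hrho (L / 2) ltac:(lra)) as [N2 HN2].
  destruct (lim_spec _ _ (lim_pow _ _ k Hrho) (eps / 4) ltac:(lra)) as [N3 HN3].
  exists (N1 + N2 + N3)%nat. intros n m Hn Hm.
  assert (Herr: forall j, (N1 + N2 + N3 <= j)%nat ->
     Q (vn j) s k = Q (vn j) S k * Q (VK v K) s k /\
     Rabs (Q (vn j) S k - rho j ^ k) < eps / 4 /\ Rabs (rho j ^ k - L ^ k) < eps / 4).
  { intros j Hj. destruct (HN1 j ltac:(lia)) as [p Hp].
    split. rewrite Hp. apply Q_split. lia.
    split; [|apply HN3; lia].
    specialize (HN2 j ltac:(lia)).
    assert (Hr: L / 2 < rho j) by (apply Rabs_def2 in HN2; lra).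
    eapply Rle_lt_trans. apply Q_err. lia.
    apply Rle_lt_trans with (INR k * INR k / INR (S + 1) * (2 / c0)).
    - apply Rmult_le_compat_l. apply Rmult_le_pos. pose proof (pos_INR k); nra.
      apply Rlt_le, Rinv_0_lt_compat, lt_0_INR; lia.
      eapply Rle_trans. apply Sx_bound. fold (rho j). lra. fold (rho j).
      unfold Rdiv. rewrite !Rmult_1_l. rewrite <- (Rinv_inv 2).
      rewrite <- Rinv_mult. apply Rinv_le_contravar. nra. nra.
    - assert (HS1: INR K + 1 <= INR (S + 1)) by (rewrite plus_INR; simpl; apply Rplus_le_compat_r, le_INR; auto).
      assert (HK8: 8 * INR k * INR k / (c0 * eps) < INR K + 1) by (pose proof (pos_INR s); lra).
      apply Rmult_lt_reg_r with (INR (S + 1) * c0 / 2). apply Rmult_lt_0_compat. nra. lra.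
      replace (INR k * INR k / INR (S + 1) * (2 / c0) * (INR (S + 1) * c0 / 2)) with (INR k * INR k)
        by (field; split; [lra| apply Rgt_not_eq, lt_0_INR; lia]).
      apply Rmult_lt_reg_r with (8 / (c0 * eps)). apply Rdiv_lt_0_compat; nra.
      replace (INR k * INR k * (8 / (c0 * eps))) with (8 * INR k * INR k / (c0 * eps)) by (field; nra).
      replace (eps / 4 * (INR (S + 1) * c0 / 2) * (8 / (c0 * eps))) with (INR (S + 1)) by (field; nra).
      lra. }
  destruct (Herr n Hn) as [E1 [A1 B1]]. destruct (Herr m Hm) as [E2 [A2 B2]].
  rewrite E1, E2.
  pose proof (Q_range (VK v K) s k ltac:(lia)) as Ha.
  set (a := Q (VK v K) s k) in *.
  replace (Q (vn n) S k * a - Q (vn m) S k * a) with ((Q (vn n) S k - Q (vn m) S k) * a) by ring.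
  rewrite Rabs_mult, (Rabs_pos_eq a) by lra.
  apply Rle_lt_trans with (Rabs (Q (vn n) S k - Q (vn m) S k) * 1).
  apply Rmult_le_compat_l. apply Rabs_pos. lra. rewrite Rmult_1_r.
  replace (Q (vn n) S k - Q (vn m) S k) with
    ((Q (vn n) S k - rho n ^ k) + (rho n ^ k - L ^ k) - (rho m ^ k - L ^ k) - (Q (vn m) S k - rho m ^ k)) by ring.
  eapply Rle_lt_trans. apply Rabs_triang.
  eapply Rle_lt_trans. apply Rplus_le_compat_l. rewrite Rabs_Ropp. apply Rle_refl.
  eapply Rle_lt_trans. apply Rplus_le_compat_r. apply Rabs_triang.
  eapply Rle_lt_trans. apply Rplus_le_compat_r. apply Rplus_le_compat_r. apply Rabs_triang.
  rewrite Rabs_Ropp. lra.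
Qed.

Lemma lim_le_ev (u : nat -> R) (l C : R) : is_lim_seq u l ->
  (exists N, forall n, (N <= n)%nat -> u n <= C) -> l <= C.
Proof.
  intros H [N HN]. destruct (Rle_lt_dec l C) as [|Hlt]; auto.
  destruct (lim_spec u l H (l - C) ltac:(lra)) as [N' HN'].
  specialize (HN (N + N')%nat ltac:(lia)). specialize (HN' (N + N')%nat ltac:(lia)).
  apply Rabs_def2 in HN'. lra.
Qed.

Lemma lim_ge_ev (u : nat -> R) (l C : R) : is_lim_seq u l ->
  (exists N, forall n, (N <= n)%nat -> C <= u n) -> C <= l.
Proof.
  intros H [N HN]. destruct (Rle_lt_dec C l) as [|Hlt]; auto.
  destruct (lim_spec u l H (C - l) ltac:(lra)) as [N' HN'].
  specialize (HN (N + N')%nat ltac:(lia)). specialize (HN' (N + N')%nat ltac:(lia)).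
  apply Rabs_def2 in HN'. lra.
Qed.

Lemma evalc_conv (vn : nat -> word) c s :
  (forall ck, In ck c -> ex_finite_lim_seq (fun n => Q (vn n) s (snd ck))) ->
  ex_finite_lim_seq (fun n => evalc c (vn n) s).
Proof.
  induction c as [|ck c IH]; intros H.
  - exists 0. unfold evalc. simpl. apply is_lim_seq_const.
  - destruct (H ck (or_introl eq_refl)) as [l1 H1].
    destruct (IH (fun ck' Hin => H ck' (or_intror Hin))) as [l2 H2].
    exists (fst ck * l1 + l2). unfold evalc. simpl. fold (evalc c (vn 0%nat) s).
    apply is_lim_seq_plus'; auto.
    apply (is_lim_seq_scal_l _ (fst ck) l1) in H1. simpl in H1. auto.
Qed.

Lemma P_conv r (vn : nat -> word) v beta u :
  (0 < r)%nat -> letterwise_cvg vn v -> 0 < pi_inf v -> 0 < beta ->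
  is_lim_seq (fun n => pi (vn n)) (beta * pi_inf v) -> valid_word r u ->
  ex_finite_lim_seq (fun n => P r (vn n) u).
Proof.
  intros Hr Hcv Hpi Hb Hlim Hv.
  set (x0 := VK v (S (size u))).
  assert (Hx0: (S (size u) <= size x0)%nat) by apply VK_size.
  destruct (rep r u x0 Hr Hv ltac:(lia)) as [c [Hc Hrep]].
  destruct (vn_split vn v Hcv (S (size u))) as [N1 HN1].
  destruct (evalc_conv vn c (size x0)) as [l Hl].
  { intros ck Hin. apply (Q_cauchy vn v beta); auto. lia. specialize (Hc ck Hin). lia. }
  exists (INR (dr r [] u) * l).
  apply is_lim_seq_ext_loc with (fun n => INR (dr r [] u) * evalc c (vn n) (size x0)).
  - exists N1. intros n Hn. destruct (HN1 n Hn) as [p Hp]. fold x0 in Hp.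
    rewrite Hp, <- Hrep. unfold P, Rat. unfold Rdiv. ring.
  - apply (is_lim_seq_scal_l _ (INR (dr r [] u)) l) in Hl. simpl in Hl. auto.
Qed.

Lemma mu_along_lim r vn u l : is_lim_seq (fun n => P r (vn n) u) l -> mu_along r vn u = l.
Proof.
  intros H. unfold mu_along. fold (P r (vn 0%nat) u).
  change (fun n => INR (dr r [] u) * INR (dr r u (vn n)) / INR (dr r [] (vn n))) with (fun n => P r (vn n) u).
  rewrite (is_lim_seq_unique _ _ H). reflexivity.
Qed.

Lemma sumR_lim (vn : nat -> word) (L : list word) (f : word -> nat -> R) (g : word -> R) :
  (forall u, In u L -> is_lim_seq (f u) (g u)) ->
  is_lim_seq (fun n => sumR (map (fun u => f u n) L)) (sumR (map g L)).
Proof.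
  induction L as [|u L IH]; intros H; simpl.
  - apply is_lim_seq_const.
  - apply is_lim_seq_plus'. apply H; left; auto. apply IH. intros; apply H; right; auto.
Qed.

Lemma sumto_lim (f : nat -> nat -> R) (g : nat -> R) M :
  (forall m, is_lim_seq (fun n => f n m) (g m)) ->
  is_lim_seq (fun n => sumto (f n) M) (sumto g M).
Proof.
  intros H. induction M; simpl. apply is_lim_seq_const. apply is_lim_seq_plus'; auto.
Qed.

Lemma sumto_Htot r v k y M : (0 < r)%nat -> sumto (Hm r v k y) M <= Htot r v k y.
Proof.
  intros Hr. unfold Htot. induction M.
  - simpl. apply sumto_nonneg. intros; apply Hm_nonneg; auto.
  - destruct (Nat.le_gt_cases (S M) (size y + 1)).
    + apply sumto_mono; auto. intros; apply Hm_nonneg; auto.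
    + simpl. rewrite Hm_zero by lia. lra.
Qed.

Lemma tail_zero (h : nat -> R) (C : R) : (forall m, 0 <= h m) -> (forall M, sumto h M <= C) ->
  is_lim_seq h 0.
Proof.
  intros Hn HC.
  destruct (ex_finite_lim_seq_incr (sumto h) C) as [l Hl].
  { intros n. simpl. specialize (Hn n). lra. }
  { auto. }
  apply is_lim_seq_ext with (fun M => sumto h (S M) - sumto h M).
  { intros M. simpl. ring. }
  replace 0 with (l - l) by ring.
  apply is_lim_seq_minus'; auto.
  apply (is_lim_seq_incr_1 (sumto h)). auto.
Qed.

Theorem mainTheorem3 (r : nat) (v : inf_word) (beta : R) (k : nat)
  (vn : nat -> word) :
  (2 <= r)%nat ->
  valid_inf_word r v ->
  0 < pi_inf v ->
  0 < beta <= 1 ->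
  (forall n, valid_word r (vn n)) ->
  letterwise_cvg vn v ->
  is_lim_seq (fun n => pi (vn n)) (beta * pi_inf v) ->
  is_lim_seq
    (fun m => sumR (map (mu_along r vn)
                 (filter (fun w => Nat.ltb (e w v) k) (words_of_size r m))))
    0.
Proof.
  intros Hr Hv Hpi Hb Hvn Hcv Hlim.
  assert (Hr0: (0 < r)%nat) by lia.
  destruct Hb as [Hb0 Hb1].
  set (h := fun m => sumR (map (mu_along r vn) (filter (bad v k) (words_of_size r m)))).
  change (is_lim_seq h 0).
  assert (HP: forall u, valid_word r u -> is_lim_seq (fun n => P r (vn n) u) (mu_along r vn u)).
  { intros u Hu. destruct (P_conv r vn v beta u Hr0 Hcv Hpi Hb0 Hlim Hu) as [l Hl].
    rewrite (mu_along_lim r vn u l Hl). auto. }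
  assert (Hhm: forall m, is_lim_seq (fun n => Hm r v k (vn n) m) (h m)).
  { intros m. unfold Hm, h.
    apply (sumR_lim vn _ (fun u n => P r (vn n) u) (mu_along r vn)).
    intros u Hu. apply HP. apply filter_In in Hu as [Hu _]. eapply wos_valid; eauto. }
  assert (Hh0: forall m, 0 <= h m).
  { intros m. apply (lim_ge_ev _ _ 0 (Hhm m)). exists 0%nat. intros; apply Hm_nonneg; auto. }
  set (c0 := beta * pi_inf v).
  assert (Hc0: 0 < c0) by (unfold c0; nra).
  destruct (ones_exist v k Hpi) as [K1 HK1].
  destruct (vn_split vn v Hcv K1) as [N1 HN1].
  destruct (lim_spec _ _ Hlim (c0 / 2) ltac:(lra)) as [N2 HN2].
  set (C := 3 / ((c0 / 2) * (c0 / 2)) * (1 + INR K1)).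
  apply (tail_zero h C Hh0). intros M.
  apply (lim_le_ev _ _ C (sumto_lim (fun n => Hm r v k (vn n)) h M Hhm)).
  exists (N1 + N2)%nat. intros n Hn.
  eapply Rle_trans. apply sumto_Htot; auto.
  eapply Rle_trans. apply Htot_bound; auto.
  assert (Hpin: c0 / 2 <= pi (vn n)).
  { specialize (HN2 n ltac:(lia)). apply Rabs_def2 in HN2. fold c0 in HN2. lra. }
  assert (Hbc: (bcnt v k (vn n) <= K1)%nat).
  { destruct (HN1 n ltac:(lia)) as [p Hp]. rewrite Hp. apply bcnt_bound; auto. }
  assert (HPr: Pr (vn n) <= 3 / ((c0 / 2) * (c0 / 2))).
  { pose proof (Pr_pi (vn n)). pose proof (pi_range (vn n)).
    assert (0 < c0 / 2 * (c0 / 2)) by nra.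
    apply Rle_trans with (3 / (pi (vn n) * pi (vn n))).
    - apply Rmult_le_reg_r with (pi (vn n) * pi (vn n)). nra.
      unfold Rdiv. rewrite Rmult_assoc, Rinv_l by nra. lra.
    - unfold Rdiv. apply Rmult_le_compat_l. lra. apply Rinv_le_contravar. auto.
      apply Rmult_le_compat; lra. }
  unfold C. apply Rmult_le_compat.
  - pose proof (Pr_ge1 (vn n)). lra.
  - pose proof (pos_INR (bcnt v k (vn n))). lra.
  - auto.
  - apply Rplus_le_compat_l. apply le_INR; auto.
Qed.
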